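(* Let $\mathcal{M}$ be a circular orientable embedding of type $(k,d)$ of a connected graph $X$. If $\mathcal{M}$ is orientably-regular, then: - the vertex-face incidence graph of $\mathcal{M}$ is edge-transitive; - the $H$-digraph of $\mathcal{M}$ is vertex-transitive.
   Context: Setting. A circular embedding is a cellular embedding in which every face is bounded by a cycle. It has type $(k,d)$ if every vertex has $d$ neighbours and every face uses $k$ vertices. $\mathcal{M}$ is orientably-regular if its group of orientation-preserving automorphisms acts regularly on the arcs (ordered pairs $(u,v)$ with $\{u,v\}$ an edge). Vertex-face incidence graph. This is the bipartite graph on the vertices and faces of $\mathcal{M}$, with a vertex adjacent to a face iff it lies on it. Vertex-face transition matrix. Fix a consistent orientation of the faces, so that each edge shared by two faces receives opposite directions in them. Let $M$ be the arc-face incidence matrix and $N$ the arc-tail incidence matrix. The transition matrix is $U=(\tfrac2kMM^T-I)(\tfrac2dNN^T-I)$. $H$-digraph. The principal Hamiltonian of a unitary $V=\sum_r\alpha_rF_r$ (spectral decomposition) is $H=-i\sum_r\log(\alpha_r)F_r$, with the branch chosen so that $-\pi<-i\log(\alpha_r)\le\pi$; it satisfies $V=\exp(iH)$. The $H$-digraph of $\mathcal{M}$ is the weighted digraph on the arcs of $X$ whose weighted adjacency matrix is the principal Hamiltonian $H$ of $U^2$; there is an arc $a\to b$ iff $H_{a,b}\neq0$. *)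

(* Defs.v *)
From HB Require Import structures.
From mathcomp Require Import all_boot all_order all_algebra all_fingroup.
From mathcomp Require Import reals exp trigo.
From mathcomp Require Import complex.
Set Implicit Arguments.
Unset Strict Implicit.
Unset Printing Implicit Defensive.
Import Order.TTheory GRing.Theory Num.Theory.
Local Open Scope ring_scope.

Definition Arc (V : finType) (adj : rel V) := {p : V * V | adj p.1 p.2}.

Definition tail (V : finType) (adj : rel V) (a : Arc adj) : V := (val a).1.
Definition head (V : finType) (adj : rel V) (a : Arc adj) : V := (val a).2.

(** reverse arc (v,u) of (u,v) (adj is assumed symmetric) *)
Definition rev_arc (V : finType) (adj : rel V) (a : Arc adj) : Arc adj :=
  insubd a (head a, tail a).

Definition arc_map (V : finType) (adj : rel V) (g : {perm V}) (a : Arc adj)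
  : Arc adj := insubd a (g (tail a), g (head a)).

(* Orientable embeddings as rotation systems: sigma is a permutation   *)
(* of the arcs which fixes tails and cyclically permutes the arcs      *)
(* leaving each vertex (the local rotation at that vertex).            *)

Definition rotation_system (V : finType) (adj : rel V) (sigma : {perm Arc adj})
  : Prop :=
  (forall a, tail (sigma a) = tail a) /\
  (forall a b, tail a = tail b -> fconnect sigma a b).

(** face-traversal permutation: the arc (u,v) is followed on its face
    by the arc sigma (v,u) = (v,w). Faces are the orbits, with the
    induced (consistent) orientation. *)
Definition face_succ (V : finType) (adj : rel V) (sigma : {perm Arc adj})
  (a : Arc adj) : Arc adj := sigma (rev_arc a).

Definition face_of (V : finType) (adj : rel V) (sigma : {perm Arc adj})
  (a : Arc adj) : {set Arc adj} := [set b | fconnect (face_succ sigma) a b].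

Definition faces (V : finType) (adj : rel V) (sigma : {perm Arc adj})
  : {set {set Arc adj}} := [set face_of sigma a | a : Arc adj].

Definition face (V : finType) (adj : rel V) (sigma : {perm Arc adj}) :=
  {F : {set Arc adj} | F \in faces sigma}.

Definition face_vertices (V : finType) (adj : rel V) (sigma : {perm Arc adj})
  (F : {set Arc adj}) : {set V} := (@tail V adj) @: F.

(** circular: every facial walk is a cycle (its vertices are pairwise
    distinct, and it has length at least 3). *)
Definition circular (V : finType) (adj : rel V) (sigma : {perm Arc adj})
  : Prop :=
  forall F, F \in faces sigma ->
    {in F &, injective (@tail V adj)} /\ (3 <= #|F|)%N.

Definition has_type (V : finType) (adj : rel V) (sigma : {perm Arc adj})
  (k d : nat) : Prop :=
  (forall v : V, #|[set w | adj v w]| = d) /\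
  (forall F, F \in faces sigma -> #|face_vertices sigma F| = k).

Definition op_aut (V : finType) (adj : rel V) (sigma : {perm Arc adj})
  (g : {perm V}) : Prop :=
  (forall u v, adj (g u) (g v) = adj u v) /\
  (forall a, arc_map g (sigma a) = sigma (arc_map g a)).

Definition orientably_regular (V : finType) (adj : rel V)
  (sigma : {perm Arc adj}) : Prop :=
  forall a b : Arc adj, exists! g : {perm V}, op_aut sigma g /\ arc_map g a = b.

Definition vf_incidence (V : finType) (adj : rel V) (sigma : {perm Arc adj})
  : rel (V + face sigma) :=
  fun x y => match x, y with
  | inl v, inr F => v \in face_vertices sigma (val F)
  | inr F, inl v => v \in face_vertices sigma (val F)
  | _, _ => false
  end.

Definition graph_aut (T : finType) (e : rel T) (g : {perm T}) : Prop :=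
  forall x y, e (g x) (g y) = e x y.

Definition edge_transitive (T : finType) (e : rel T) : Prop :=
  forall x y x' y', e x y -> e x' y' ->
    exists g : {perm T}, graph_aut e g /\
      ((g x = x' /\ g y = y') \/ (g x = y' /\ g y = x')).

(* Matrices over the complex numbers R[i]; arcs are indexed by         *)
(* 'I_#|arc| via enum_val.                                             *)

Local Open Scope complex_scope.

Definition arc_face_mx (R : realType) (V : finType) (adj : rel V)
  (sigma : {perm Arc adj}) : 'M[R[i]]_(#|{: Arc adj}|, #|{: face sigma}|) :=
  \matrix_(i, j) ((enum_val (A := {: Arc adj}) i \in val (enum_val (A := {: face sigma}) j) : bool)%:R).

Definition arc_tail_mx (R : realType) (V : finType) (adj : rel V)
  : 'M[R[i]]_(#|{: Arc adj}|, #|{: V}|) :=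
  \matrix_(i, j) ((tail (enum_val (A := {: Arc adj}) i) == enum_val (A := {: V}) j)%:R).

Definition transition_mx (R : realType) (V : finType) (adj : rel V)
  (sigma : {perm Arc adj}) (k d : nat) : 'M[R[i]]_(#|{: Arc adj}|) :=
  (((2%:R / k%:R) *: (arc_face_mx R sigma *m (arc_face_mx R sigma)^T)
      - 1%:M) *m
   ((2%:R / d%:R) *: (arc_tail_mx R adj *m (arc_tail_mx R adj)^T) - 1%:M)).

Definition cmod (R : realType) (z : R[i]) : R :=
  Num.sqrt ((@complex.Re R z) ^+ 2 + (@complex.Im R z) ^+ 2).
Definition cconj (R : realType) (z : R[i]) : R[i] := ((@complex.Re R z)) -i* ((@complex.Im R z)).

(** principal argument in (-pi, pi] of a nonzero complex number *)
Definition parg (R : realType) (z : R[i]) : R :=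
  let r := cmod z in
  if 0 <= (@complex.Im R z) then acos ((@complex.Re R z) / r) else - acos ((@complex.Re R z) / r).

(** -i log(z) for the principal branch: log z = ln|z| + i arg z *)
Definition neg_i_plog (R : realType) (z : R[i]) : R[i] :=
  (parg z) -i* (ln (cmod z)).

Definition conjT (R : realType) (n : nat) (A : 'M[R[i]]_n) : 'M[R[i]]_n :=
  map_mx (@cconj R) A^T.

Definition principal_hamiltonian (R : realType) (n : nat)
  (W H : 'M[R[i]]_n) : Prop :=
  exists (m : nat) (alpha : 'I_m -> R[i]) (F : 'I_m -> 'M[R[i]]_n),
    [/\ injective alpha,
        forall r, F r != 0,
        forall r, F r *m F r = F r,
        forall r, conjT (F r) = F r &
        forall r s, r != s -> F r *m F s = 0] /\
    [/\ \sum_(r < m) F r = 1%:M,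
        W = \sum_(r < m) alpha r *: F r &
        H = \sum_(r < m) neg_i_plog (alpha r) *: F r].

Definition wdigraph_vertex_transitive (C : Type) (n : nat) (H : 'M[C]_n)
  : Prop :=
  forall i j : 'I_n, exists g : 'S_n,
    g i = j /\ forall x y, H (g x) (g y) = H x y.

(* Main.v *)
Require Import Defs.
From HB Require Import structures.
From mathcomp Require Import all_boot all_order all_algebra all_fingroup.
From mathcomp Require Import reals exp trigo.
From mathcomp Require Import complex.
Import Order.TTheory GRing.Theory Num.Theory.
Set Implicit Arguments.
Unset Strict Implicit.
Unset Printing Implicit Defensive.

Definition gadj (V : finType) (adj : rel V) (g : {perm V}) :=
  forall u v, adj (g u) (g v) = adj u v.

Lemma val_arc_map (V : finType) (adj : rel V) (g : {perm V}) (a : Arc adj) :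
  gadj adj g -> val (arc_map g a) = (g (tail a), g (Defs.head a)).
Proof.
move=> Hg; rewrite /arc_map insubdK // unfold_in /= Hg.
by case: a => [[u v] /=].
Qed.

Lemma val_rev_arc (V : finType) (adj : rel V) (a : Arc adj) :
  symmetric adj -> val (rev_arc a) = (Defs.head a, tail a).
Proof.
move=> Hs; rewrite /rev_arc insubdK // unfold_in /= Hs.
by case: a => [[u v] /=].
Qed.

Lemma arc_map_inj (V : finType) (adj : rel V) (g : {perm V}) :
  gadj adj g -> injective (arc_map (adj:=adj) g).
Proof.
move=> Hg a b /(congr1 val); rewrite !val_arc_map // => -[] /perm_inj ht /perm_inj hh.
apply: val_inj; move: ht hh; rewrite /tail /Defs.head.
by case: (val a) => ? ?; case: (val b) => ? ? /= -> ->.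
Qed.

Lemma rev_arc_inj (V : finType) (adj : rel V) :
  symmetric adj -> injective (@rev_arc V adj).
Proof.
move=> Hs a b /(congr1 val); rewrite !val_rev_arc // => -[] hh ht.
apply: val_inj; move: ht hh; rewrite /tail /Defs.head.
by case: (val a) => ? ?; case: (val b) => ? ? /= -> ->.
Qed.

Lemma tail_arc_map (V : finType) (adj : rel V) (g : {perm V}) (a : Arc adj) :
  gadj adj g -> tail (arc_map g a) = g (tail a).
Proof. by move=> Hg; rewrite /tail val_arc_map. Qed.

Lemma arc_map_rev (V : finType) (adj : rel V) (g : {perm V}) (a : Arc adj) :
  symmetric adj -> gadj adj g -> arc_map g (rev_arc a) = rev_arc (arc_map g a).
Proof.
move=> Hs Hg; apply: val_inj.
rewrite val_arc_map // val_rev_arc //.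
by rewrite /tail /Defs.head val_rev_arc // val_arc_map.
Qed.

Lemma face_succ_inj (V : finType) (adj : rel V) (sigma : {perm Arc adj}) :
  symmetric adj -> injective (face_succ sigma).
Proof. by move=> Hs a b /perm_inj /rev_arc_inj; apply. Qed.

Lemma arc_map_face_succ (V : finType) (adj : rel V) (sigma : {perm Arc adj})
  (g : {perm V}) (a : Arc adj) :
  symmetric adj -> op_aut sigma g ->
  arc_map g (face_succ sigma a) = face_succ sigma (arc_map g a).
Proof.
move=> Hs [Hg Hc]; rewrite /face_succ Hc arc_map_rev //.
Qed.

Lemma arc_map_iter (V : finType) (adj : rel V) (sigma : {perm Arc adj})
  (g : {perm V}) (a : Arc adj) n :
  symmetric adj -> op_aut sigma g ->
  arc_map g (iter n (face_succ sigma) a) = iter n (face_succ sigma) (arc_map g a).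
Proof.
move=> Hs Hg; elim: n => [|n IH] //=; by rewrite arc_map_face_succ // IH.
Qed.

Lemma face_of_map (V : finType) (adj : rel V) (sigma : {perm Arc adj})
  (g : {perm V}) (a : Arc adj) :
  symmetric adj -> op_aut sigma g ->
  face_of sigma (arc_map g a) = arc_map g @: face_of sigma a.
Proof.
move=> Hs Hg; apply/setP => b; rewrite /face_of inE.
apply/idP/imsetP.
  move/iter_findex => <-; exists (iter (findex (face_succ sigma) (arc_map g a) b)
                 (face_succ sigma) a); first by rewrite inE fconnect_iter.
  by rewrite arc_map_iter.
by case=> c; rewrite inE => /iter_findex <- ->; rewrite arc_map_iter // fconnect_iter.
Qed.

Lemma faces_map (V : finType) (adj : rel V) (sigma : {perm Arc adj})
  (g : {perm V}) F :
  symmetric adj -> op_aut sigma g -> F \in faces sigma ->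
  arc_map g @: F \in faces sigma.
Proof.
move=> Hs Hg /imsetP [a _ ->]; rewrite -face_of_map //.
by apply/imsetP; exists (arc_map g a).
Qed.

Definition fmap (V : finType) (adj : rel V) (sigma : {perm Arc adj})
  (g : {perm V}) (F : face sigma) : face sigma :=
  insubd F (arc_map g @: val F).

Lemma val_fmap (V : finType) (adj : rel V) (sigma : {perm Arc adj})
  (g : {perm V}) (F : face sigma) :
  symmetric adj -> op_aut sigma g -> val (fmap g F) = arc_map g @: val F.
Proof.
move=> Hs Hg; rewrite /fmap insubdK // unfold_in /=.
exact: faces_map (valP F).
Qed.

Lemma fmap_inj (V : finType) (adj : rel V) (sigma : {perm Arc adj})
  (g : {perm V}) :
  symmetric adj -> op_aut sigma g -> injective (@fmap V adj sigma g).
Proof.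
move=> Hs Hg F G /(congr1 val); rewrite !val_fmap // => /imset_inj H.
apply: val_inj; apply: H; apply: arc_map_inj; exact: Hg.1.
Qed.

Definition smap (V : finType) (adj : rel V) (sigma : {perm Arc adj})
  (g : {perm V}) (x : V + face sigma) : V + face sigma :=
  match x with inl v => inl (g v) | inr F => inr (fmap g F) end.

Lemma smap_inj (V : finType) (adj : rel V) (sigma : {perm Arc adj})
  (g : {perm V}) :
  symmetric adj -> op_aut sigma g -> injective (@smap V adj sigma g).
Proof.
move=> Hs Hg [u|F] [v|G] //= [].
  by move/perm_inj ->.
by move/(fmap_inj Hs Hg) ->.
Qed.

Lemma fv_map (V : finType) (adj : rel V) (sigma : {perm Arc adj})
  (g : {perm V}) (F : {set Arc adj}) v :
  op_aut sigma g ->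
  (g v \in face_vertices sigma (arc_map g @: F)) = (v \in face_vertices sigma F).
Proof.
move=> [Hg _]; rewrite /face_vertices -imset_comp.
rewrite (eq_imset (g := g \o (@tail V adj))); last by move=> a /=; rewrite tail_arc_map.
by rewrite imset_comp mem_imset //; apply: perm_inj.
Qed.

Lemma smap_aut (V : finType) (adj : rel V) (sigma : {perm Arc adj})
  (g : {perm V}) (Hs : symmetric adj) (Hg : op_aut sigma g) :
  graph_aut (@vf_incidence V adj sigma) (perm (smap_inj Hs Hg)).
Proof.
move=> [u|F] [v|G]; rewrite !permE //=; rewrite val_fmap // fv_map //.
Qed.

Lemma face_of_mem (V : finType) (adj : rel V) (sigma : {perm Arc adj}) F a :
  symmetric adj -> F \in faces sigma -> a \in F -> face_of sigma a = F.
Proof.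
move=> Hs /imsetP [b _ ->]; rewrite /face_of inE => hb.
apply/setP => c; rewrite !inE.
have sym : connect_sym (frel (face_succ sigma)).
  by move=> x y; apply: fconnect_sym; exact: face_succ_inj.
by rewrite (same_connect sym hb).
Qed.

Lemma vf_core (V : finType) (adj : rel V) (sigma : {perm Arc adj})
  (Hs : symmetric adj) (M_reg : orientably_regular sigma) v F v' F' :
  v \in face_vertices sigma (val F) -> v' \in face_vertices sigma (val F') ->
  exists G : {perm V + face sigma}, graph_aut (@vf_incidence V adj sigma) G /\
     G (inl v) = inl v' /\ G (inr F) = inr F'.
Proof.
move=> /imsetP [a aF ->] /imsetP [a' aF' ->].
have [g [[Hg Hga] _]] := M_reg a a'.
exists (perm (smap_inj Hs Hg)); split; first exact: smap_aut.
rewrite !permE /=; split; first by rewrite -tail_arc_map ?Hga //; case: Hg.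
congr inr; apply: val_inj; rewrite val_fmap //.
rewrite -(face_of_mem Hs (valP F) aF) -face_of_map // Hga.
exact: face_of_mem Hs (valP F') aF'.
Qed.

Lemma part1 (V : finType) (adj : rel V) (sigma : {perm Arc adj})
  (Hs : symmetric adj) (M_reg : orientably_regular sigma) :
  edge_transitive (@vf_incidence V adj sigma).
Proof.
move=> [v|F] [w|G] [v'|F'] [w'|G'] //= h h'.
- have [g [ga [h1 h2]]] := vf_core Hs M_reg h h'.
  by exists g; split => //; left.
- have [g [ga [h1 h2]]] := vf_core Hs M_reg h h'.
  by exists g; split => //; right.
- have [g [ga [h1 h2]]] := vf_core Hs M_reg h h'.
  by exists g; split => //; right.
- have [g [ga [h1 h2]]] := vf_core Hs M_reg h h'.
  by exists g; split => //; left.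
Qed.
Local Open Scope ring_scope.

Definition cj (C : fieldType) n (p : 'S_n) (A : 'M[C]_n) : 'M[C]_n :=
  \matrix_(x, y) A (p x) (p y).

Lemma cjM (C : fieldType) n (p : 'S_n) (A B : 'M[C]_n) :
  cj p (A *m B) = cj p A *m cj p B.
Proof.
apply/matrixP => x y; rewrite !mxE (reindex_inj (@perm_inj _ p)).
by apply: eq_bigr => z _; rewrite !mxE.
Qed.

Lemma cjD (C : fieldType) n (p : 'S_n) (A B : 'M[C]_n) :
  cj p (A + B) = cj p A + cj p B.
Proof. by apply/matrixP => x y; rewrite !mxE. Qed.

Lemma cjN (C : fieldType) n (p : 'S_n) (A : 'M[C]_n) :
  cj p (- A) = - cj p A.
Proof. by apply/matrixP => x y; rewrite !mxE. Qed.

Lemma cjZ (C : fieldType) n (p : 'S_n) c (A : 'M[C]_n) :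
  cj p (c *: A) = c *: cj p A.
Proof. by apply/matrixP => x y; rewrite !mxE. Qed.

Lemma cj1 (C : fieldType) n (p : 'S_n) :
  cj p (1%:M : 'M[C]_n) = 1%:M.
Proof. by apply/matrixP => x y; rewrite !mxE (inj_eq (@perm_inj _ p)). Qed.

Lemma cj_sum (C : fieldType) n (p : 'S_n) m (G : 'I_m -> 'M[C]_n) :
  cj p (\sum_(r < m) G r) = \sum_(r < m) cj p (G r).
Proof.
apply/matrixP => x y; rewrite !mxE !summxE; apply: eq_bigr => r _; by rewrite mxE.
Qed.

Lemma spectral_inv (C : fieldType) n (p : 'S_n) (W : 'M[C]_n) m
  (alpha : 'I_m -> C) (F : 'I_m -> 'M[C]_n) :
  injective alpha ->
  (forall r, F r *m F r = F r) ->
  (forall r s, r != s -> F r *m F s = 0) ->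
  \sum_(r < m) F r = 1%:M ->
  W = \sum_(r < m) alpha r *: F r ->
  cj p W = W ->
  forall r, cj p (F r) = F r.
Proof.
move=> ainj Fid Fo Fsum WE Wc.
have WF r : W *m F r = alpha r *: F r.
  rewrite WE mulmx_suml (bigD1 r) //= big1 ?addr0; first by rewrite -scalemxAl Fid.
  by move=> s sr; rewrite -scalemxAl Fo ?scaler0.
have FW r : F r *m W = alpha r *: F r.
  rewrite WE mulmx_sumr (bigD1 r) //= big1 ?addr0; first by rewrite -scalemxAr Fid.
  by move=> s sr; rewrite -scalemxAr Fo ?scaler0 // eq_sym.
have WcF s : W *m cj p (F s) = alpha s *: cj p (F s).
  by rewrite -{1}Wc -cjM WF cjZ.
have O r s : r != s -> F r *m cj p (F s) = 0.
  move=> rs.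
  have e1 : F r *m W *m cj p (F s) = alpha r *: (F r *m cj p (F s)).
    by rewrite FW -scalemxAl.
  have e2 : F r *m W *m cj p (F s) = alpha s *: (F r *m cj p (F s)).
    by rewrite -mulmxA WcF -scalemxAr.
  have : (alpha r - alpha s) *: (F r *m cj p (F s)) = 0.
    by rewrite scalerBl -e1 -e2 subrr.
  move/eqP; rewrite scalemx_eq0 subr_eq0 => /orP [|/eqP //].
  by move/eqP/ainj/eqP; rewrite (negbTE rs).
move=> r.
have h1 : cj p (F r) = F r *m cj p (F r).
  rewrite -{1}(mul1mx (cj p (F r))) -Fsum mulmx_suml (bigD1 r) //= big1 ?addr0 //.
  by move=> s sr; rewrite O.
have h2 : F r = F r *m cj p (F r).
  rewrite -{1}(mulmx1 (F r)) -(cj1 _ p) -Fsum cj_sum mulmx_sumr (bigD1 r) //= big1 ?addr0 //.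
  by move=> s sr; rewrite O // eq_sym.
by rewrite h1 -h2.
Qed.

Lemma parc_inj (V : finType) (adj : rel V) (g : {perm V}) :
  gadj adj g ->
  injective (fun i : 'I_#|{: Arc adj}| =>
     enum_rank (arc_map g (enum_val (A := {: Arc adj}) i)) : 'I_#|{: Arc adj}|).
Proof.
move=> Hg i j /(congr1 enum_val); rewrite !enum_rankK.
by move/(arc_map_inj Hg)/(congr1 enum_rank); rewrite !enum_valK.
Qed.

Lemma fmap_inj' (V : finType) (adj : rel V) (sigma : {perm Arc adj})
  (g : {perm V}) :
  symmetric adj -> op_aut sigma g ->
  injective (fun j : 'I_#|{: face sigma}| =>
     enum_rank (fmap g (enum_val (A := {: face sigma}) j)) : 'I_#|{: face sigma}|).
Proof.
move=> Hs Hg i j /(congr1 enum_val); rewrite !enum_rankK.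
by move/(fmap_inj Hs Hg)/(congr1 enum_rank); rewrite !enum_valK.
Qed.

Lemma MM_inv (R : realType) (V : finType) (adj : rel V) (sigma : {perm Arc adj})
  (g : {perm V}) (Hs : symmetric adj) (Hg : op_aut sigma g) :
  cj (perm (parc_inj Hg.1))
    (arc_face_mx R sigma *m (arc_face_mx R sigma)^T) =
    arc_face_mx R sigma *m (arc_face_mx R sigma)^T.
Proof.
apply/matrixP => x y; rewrite !mxE (reindex_inj (fmap_inj' Hs Hg)).
apply: eq_bigr => j _; rewrite !mxE !permE !enum_rankK val_fmap //.
by rewrite !mem_imset //; apply: arc_map_inj; case: Hg.
Qed.

Lemma NN_inv (R : realType) (V : finType) (adj : rel V) (sigma : {perm Arc adj})
  (g : {perm V}) (Hg : op_aut sigma g) :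
  cj (perm (parc_inj Hg.1))
    (arc_tail_mx R adj *m (arc_tail_mx R adj)^T) =
    arc_tail_mx R adj *m (arc_tail_mx R adj)^T.
Proof.
have ginj : injective (fun j : 'I_#|{: V}| =>
     enum_rank (g (enum_val (A := {: V}) j)) : 'I_#|{: V}|).
  move=> i j /(congr1 enum_val); rewrite !enum_rankK.
  by move/perm_inj/(congr1 enum_rank); rewrite !enum_valK.
apply/matrixP => x y; rewrite !mxE (reindex_inj ginj).
apply: eq_bigr => j _; rewrite !mxE !permE !enum_rankK !tail_arc_map; try exact: Hg.1.
by rewrite !(inj_eq (@perm_inj _ g)).
Qed.

Lemma U_inv (R : realType) (V : finType) (adj : rel V) (sigma : {perm Arc adj})
  (k d : nat) (g : {perm V}) (Hs : symmetric adj) (Hg : op_aut sigma g) :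
  cj (perm (parc_inj Hg.1)) (transition_mx R sigma k d) = transition_mx R sigma k d.
Proof.
by rewrite /transition_mx cjM !cjD !cjN !cjZ cj1 MM_inv // NN_inv.
Qed.

Lemma part2 (R : realType) (V : finType) (adj : rel V)
  (sigma : {perm Arc adj}) (k d : nat)
  (Hs : symmetric adj) (M_reg : orientably_regular sigma) :
  forall H, principal_hamiltonian
               (transition_mx R sigma k d *m transition_mx R sigma k d) H ->
             wdigraph_vertex_transitive H.
Proof.
move=> H [m [alpha [F [[ainj _ Fid _ Fo] [Fsum WE HE]]]]] i j.
have [g [[Hg Hga] _]] := M_reg (enum_val i) (enum_val j).
pose p := perm (parc_inj Hg.1).
have Wc : cj p (transition_mx R sigma k d *m transition_mx R sigma k d) =
          transition_mx R sigma k d *m transition_mx R sigma k d.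
  by rewrite cjM U_inv.
have Fc := spectral_inv ainj Fid Fo Fsum WE Wc.
exists p; split.
  by rewrite permE Hga enum_valK.
move=> x y.
have : cj p H = H.
  by rewrite HE cj_sum; apply: eq_bigr => r _; rewrite cjZ Fc.
by move/matrixP => /(_ x y); rewrite mxE.
Qed.

Theorem theorem5p1 (R : realType) (V : finType) (adj : rel V)
  (sigma : {perm Arc adj}) (k d : nat)
  (adj_sym : symmetric adj) (adj_irr : irreflexive adj)
  (X_conn : forall u v : V, connect adj u v)
  (M_rot : rotation_system sigma) (M_circ : circular sigma)
  (M_type : has_type sigma k d)
  (M_reg : orientably_regular sigma) :
  edge_transitive (@vf_incidence V adj sigma) /\
  (forall H, principal_hamiltonian
               (transition_mx R sigma k d *m transition_mx R sigma k d) H ->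
             wdigraph_vertex_transitive H).
Proof.
split; [exact: part1 | exact: part2].
Qed.
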